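(* Let $R$ be a commutative ring with identity that is not an integral domain. If the girth of $\Gamma(R)$ is $4$ or $\infty$, then either $\gamma_t(\Gamma(R)) = \gamma(\Gamma(R))$ or $R\cong \mathbb{Z}_2\times D$ for some integral domain $D$.
   Context: All rings are commutative with identity. The zero-divisor graph $\Gamma(R)$ has vertex set $Z(R)^*$ (nonzero zero-divisors); distinct $r,s$ are adjacent iff $rs=0$, and $x$ is adjacent to itself iff $x^2=0$. A dominating set is $X\subseteq Z(R)^*$ such that every vertex not in $X$ is adjacent to some element of $X$; a total dominating set is $X$ such that every vertex (including those in $X$) is adjacent to some element of $X$ (self-adjacency counts). $\gamma,\gamma_t$ are the respective minimum cardinalities. The girth is the length of a shortest cycle through distinct vertices (loops not counted), $\infty$ if none. *)

(* Defs.v *)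
From HB Require Import structures.
From mathcomp Require Import all_boot all_order all_algebra.
From mathcomp Require Import boolp classical_sets cardinality.
Set Implicit Arguments. Unset Strict Implicit. Unset Printing Implicit Defensive.
Import GRing.Theory.
Local Open Scope ring_scope.
Local Open Scope classical_set_scope.

Section ZeroDivisorGraph.
Variable R : comNzRingType.

(* Z(R)^* : nonzero zero-divisors, the vertex set of Gamma(R). *)
Definition zdv_star : set R :=
  [set x | x != 0 /\ exists y : R, y != 0 /\ x * y = 0].

Definition zdg_adj (x y : R) : Prop :=
  (x <> y /\ x * y = 0) \/ (x = y /\ x * x = 0).

Definition dominating (X : set R) : Prop :=
  X `<=` zdv_star /\
  forall v, zdv_star v -> ~ X v -> exists2 x, X x & zdg_adj v x.

Definition total_dominating (X : set R) : Prop :=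
  X `<=` zdv_star /\
  forall v, zdv_star v -> exists2 x, X x & zdg_adj v x.

(* gamma(Gamma(R)) = gamma_t(Gamma(R)) as (possibly infinite) cardinals:
   a minimum-cardinality dominating set and a minimum-cardinality total
   dominating set have the same cardinality. *)
Definition gamma_eq_gammat : Prop :=
  exists X Y : set R,
    [/\ dominating X, (forall X', dominating X' -> (X #<= X')%card),
        total_dominating Y, (forall Y', total_dominating Y' -> (Y #<= Y')%card)
      & (X #= Y)%card].

Definition has_cycle (n : nat) : Prop :=
  (3 <= n)%N /\
  exists v : 'I_n -> R,
    [/\ injective v, (forall i, zdv_star (v i))
      & forall i, zdg_adj (v i) (v (ordS i))].

(* girth_is (Some n): the shortest cycle has length n;
   girth_is None: girth is infinity (no cycle). *)
Definition girth_is (g : option nat) : Prop :=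
  match g with
  | Some n => has_cycle n /\ forall m, (m < n)%N -> ~ has_cycle m
  | None => forall m, ~ has_cycle m
  end.

End ZeroDivisorGraph.

Definition is_integral_domain (R : comNzRingType) : Prop :=
  forall a b : R, a * b = 0 -> a = 0 \/ b = 0.

(* Main.v *)
Require Import Defs.
From HB Require Import structures.
From mathcomp Require Import all_boot all_order all_algebra.
From mathcomp Require Import boolp classical_sets cardinality.
From mathcomp Require Import functions ring.
Set Implicit Arguments. Unset Strict Implicit. Unset Printing Implicit Defensive.
Import GRing.Theory.
Local Open Scope ring_scope.

Record Dhyp (R : comNzRingType) (c : R) : Prop := {
  dh_idem : c * c = c;
  dh_ne1 : c != 1;
  dh_int : forall x y : R, x * c = 0 -> y * c = 0 -> x * y = 0 -> x = 0 \/ y = 0;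
  dh_rc : forall r : R, r * c = 0 \/ r * c = c;
  dh_ne0 : c != 0 }.

Definition Dty (R : comNzRingType) (c : R) (h : Dhyp c) := {x : R | x * c == 0}.

HB.instance Definition _ (R : comNzRingType) (c : R) (h : Dhyp c) :=
  Choice.copy (Dty h) {x : R | x * c == 0}.

Section DS.
Variables (R : comNzRingType) (c : R) (h : Dhyp c).
Local Notation D := (Dty h).

Lemma Dinj (a b : D) : proj1_sig a = proj1_sig b -> a = b.
Proof. by move: a b => [a Ha] [b Hb] /= E; subst; congr exist; apply: bool_irrelevance. Qed.

Lemma Dc (a : D) : proj1_sig a * c = 0.
Proof. by apply/eqP; exact: (proj2_sig a). Qed.

Lemma D0P : (0 : R) * c == 0. Proof. by rewrite mul0r. Qed.
Lemma D1P : (1 - c) * c == 0. Proof. by rewrite mulrBl mul1r dh_idem // subrr. Qed.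
Lemma DaddP (a b : D) : (proj1_sig a + proj1_sig b) * c == 0.
Proof. by rewrite mulrDl !Dc addr0. Qed.
Lemma DoppP (a : D) : (- proj1_sig a) * c == 0.
Proof. by rewrite mulNr Dc oppr0. Qed.
Lemma DmulP (a b : D) : (proj1_sig a * proj1_sig b) * c == 0.
Proof. by rewrite -mulrA Dc mulr0. Qed.

Definition Dzero : D := exist (fun x : R => x * c == 0) 0 D0P.
Definition Done : D := exist (fun x : R => x * c == 0) (1 - c) D1P.
Definition Dadd (a b : D) : D := exist (fun x : R => x * c == 0) _ (DaddP a b).
Definition Dopp (a : D) : D := exist (fun x : R => x * c == 0) _ (DoppP a).
Definition Dmul (a b : D) : D := exist (fun x : R => x * c == 0) _ (DmulP a b).

Lemma DaddA : associative Dadd.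
Proof. by move=> a b d; apply: Dinj; rewrite /= addrA. Qed.
Lemma DaddC : commutative Dadd.
Proof. by move=> a b; apply: Dinj; rewrite /= addrC. Qed.
Lemma Dadd0 : left_id Dzero Dadd.
Proof. by move=> a; apply: Dinj; rewrite /= add0r. Qed.
Lemma DaddN : left_inverse Dzero Dopp Dadd.
Proof. by move=> a; apply: Dinj; rewrite /= addNr. Qed.

HB.instance Definition _ := GRing.isZmodule.Build D DaddA DaddC Dadd0 DaddN.

Lemma DmulA : associative Dmul.
Proof. by move=> a b d; apply: Dinj; rewrite /= mulrA. Qed.
Lemma DmulC : commutative Dmul.
Proof. by move=> a b; apply: Dinj; rewrite /= mulrC. Qed.
Lemma Dmul1 : left_id Done Dmul.
Proof. by move=> a; apply: Dinj; rewrite /= mulrBl mul1r mulrC Dc subr0. Qed.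
Lemma DmulD : left_distributive Dmul Dadd.
Proof. by move=> a b d; apply: Dinj; rewrite /= mulrDl. Qed.
Lemma Done0 : Done != Dzero.
Proof.
apply/eqP => /(congr1 (@proj1_sig _ _)) /= /eqP; rewrite subr_eq0 => /eqP E.
by move: (dh_ne1 h); rewrite E eqxx.
Qed.

HB.instance Definition _ := GRing.Zmodule_isComNzRing.Build D DmulA DmulC Dmul1 DmulD Done0.

Definition Dunit : {pred D} := fun x => `[< exists y : D, y * x = 1 >].
Definition Dinv (x : D) : D :=
  match pselect (exists y : D, y * x = 1) with
  | left e => proj1_sig (cid e)
  | right _ => x end.

Lemma DmulV : {in Dunit, left_inverse 1 Dinv *%R}.
Proof.
move=> x xu; rewrite /Dinv.
case: pselect => [e2|ne]; first exact: (proj2_sig (cid e2)).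
exfalso; apply: ne; move: xu; rewrite unfold_in /Dunit; move=> /asboolP; exact.
Qed.
Lemma DunitP : forall x y : D, y * x = 1 -> Dunit x.
Proof. by move=> x y E; apply/asboolP; exists y. Qed.
Lemma Dinv_out : {in [predC Dunit], Dinv =1 id}.
Proof.
move=> x; rewrite inE /= unfold_in /Dunit => /asboolP ne; rewrite /Dinv.
by case: pselect.
Qed.

HB.instance Definition _ := GRing.ComNzRing_hasMulInverse.Build D DmulV DunitP Dinv_out.

Lemma Dintegral : GRing.integral_domain_axiom D.
Proof.
move=> x y E.
have E' : proj1_sig x * proj1_sig y = 0 by have := congr1 (@proj1_sig _ _) E.
case: (dh_int h (Dc x) (Dc y) E') => [/= x0|y0].
  by apply/orP; left; apply/eqP; apply: Dinj.
by apply/orP; right; apply/eqP; apply: Dinj.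
Qed.

HB.instance Definition _ := GRing.ComUnitRing_isIntegral.Build D Dintegral.


Lemma Dc1P (x : R) : (x * (1 - c)) * c == 0.
Proof. by rewrite -mulrA (eqP D1P) mulr0. Qed.

Definition fmap (x : R) : ('Z_2 * D)%type :=
  ((x * c != 0)%:R, exist (fun x : R => x * c == 0) _ (Dc1P x)).

Lemma c2 : c + c = 0.
Proof.
case: (dh_rc h (1 + 1)); rewrite mulrDl mul1r // => /eqP.
by rewrite -subr_eq0 addrK (negbTE (dh_ne0 h)).
Qed.

Lemma rcE (r : R) : (r * c != 0) = (r * c == c).
Proof.
case: (dh_rc h r) => ->; first by rewrite eqxx eq_sym (negbTE (dh_ne0 h)).
by rewrite eqxx (dh_ne0 h).
Qed.

Lemma Z2cases (z : 'Z_2) : z = 0 \/ z = 1.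
Proof. by case: z => [[|[|n]] //= Hn]; [left|right]; apply: val_inj. Qed.

Lemma fmap_add : zmod_morphism fmap.
Proof.
move=> x y; rewrite /fmap /=; congr pair; last by apply: Dinj; rewrite /= mulrBl.
rewrite mulrBl.
case: (dh_rc h x) => ->; case: (dh_rc h y) => ->;
  rewrite ?subrr ?sub0r ?subr0 ?eqxx ?oppr_eq0 ?(dh_ne0 h) //=.
all: by apply: val_inj.
Qed.

Lemma fmap_mul : multiplicative fmap.
Proof.
split.
  move=> x y; rewrite /fmap /=; congr pair; last first.
    apply: Dinj => /=.
    have e : (1 - c) * (1 - c) = 1 - c.
      by rewrite mulrBl mul1r mulrBr mulr1 dh_idem // subrr subr0.
    by rewrite mulrACA e.
  rewrite /= -mulrA.
  case: (dh_rc h y) => ->; rewrite ?mulr0 ?eqxx ?(dh_ne0 h) /= ?mul0r ?mulr1 //.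
  by rewrite mulr0.
have -> : (1 : ('Z_2 * D)%type) = (1, 1) by []. rewrite /fmap /= mul1r (dh_ne0 h); congr pair; apply: Dinj => /=.
by rewrite mul1r.
Qed.

End DS.

HB.instance Definition _ (R : comNzRingType) (c : R) (h : Dhyp c) :=
  GRing.isZmodMorphism.Build _ _ (@fmap R c h) (@fmap_add R c h).
HB.instance Definition _ (R : comNzRingType) (c : R) (h : Dhyp c) :=
  GRing.isMultiplicative.Build _ _ (@fmap R c h) (@fmap_mul R c h).

Lemma fmap_bij (R : comNzRingType) (c : R) (h : Dhyp c) : bijective (@fmap R c h).
Proof.
pose g (p : ('Z_2 * Dty h)%type) : R := (if p.1 == 0 then 0 else c) + proj1_sig p.2.
exists g.
  move=> x; rewrite /g /fmap /=.
  case: (dh_rc h x) => E; rewrite E ?eqxx ?(dh_ne0 h) /=.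
    by rewrite add0r mulrBr mulr1 E subr0.
  rewrite mulrBr mulr1 E addrC subrK //.
case=> z [v vc] /=; rewrite /fmap /g /=.
have vc' : v * c = 0 by apply/eqP.
have Hz : (if z == 0 then 0 else c) * c = (if z == 0 then 0 else c).
  by case: ifP => _; rewrite ?mul0r ?dh_idem.
congr pair.
  rewrite mulrDl vc' addr0 Hz.
  by case: (Z2cases z) => ->; rewrite ?eqxx ?(dh_ne0 h).
apply: Dinj => /=; rewrite mulrDl !mulrBr !mulr1 vc' subr0 Hz subrr add0r //.
Qed.
Section ML.
Variable R : comNzRingType.
Hypothesis NT : forall x y z : R, x != 0 -> y != 0 -> z != 0 ->
  x != y -> y != z -> x != z -> x * y = 0 -> y * z = 0 -> x * z = 0 -> False.

Local Notation Zs := (@zdv_star R).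

Lemma ZsP (v : R) : Zs v <-> v != 0 /\ exists y, y != 0 /\ v * y = 0.
Proof. by []. Qed.

Lemma neq_of (x y : R) : x * x != 0 -> x * y = 0 -> x != y.
Proof. by move=> nx xy; apply/eqP => E; move: nx; rewrite {2}E xy eqxx. Qed.

Lemma Fsq (x y : R) : x != 0 -> y != 0 -> x * x = 0 -> y * y = 0 -> x * y = 0 ->
  y = x \/ y = - x.
Proof.
move=> x0 y0 xx yy xy.
case: (eqVneq y x) => [->|yx]; first by left.
case: (eqVneq y (- x)) => [->|ynx]; first by right.
have h1 : x + y != 0 by rewrite addrC addr_eq0.
have h2 : x != y by rewrite eq_sym.
have h3 : y != x + y.
  by apply/eqP => /eqP; rewrite eq_sym -subr_eq0 addrK; apply/negP.
have h4 : x != x + y.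
  by apply/eqP => /eqP; rewrite eq_sym addrC -subr_eq0 addrK; apply/negP.
have h5 : y * (x + y) = 0 by rewrite mulrDr mulrC xy yy addr0.
have h6 : x * (x + y) = 0 by rewrite mulrDr xx xy addr0.
by exfalso; apply: (NT x0 y0 h1 h2 h3 h4 xy h5 h6).
Qed.

Definition DomA := exists x : R, [/\ x != 0, x * x = 0 & forall v, Zs v -> v * x = 0].
Definition DomB := exists a b : R, [/\ Zs a, Zs b, a != b, a * b = 0 &
  forall v, Zs v -> v * a = 0 \/ v * b = 0].

Lemma ML (a0 b0 : R) : a0 != 0 -> b0 != 0 -> a0 * b0 = 0 -> DomA \/ DomB.
Proof.
move=> a00 b00 ab0.
case: (pselect (exists u : R, u != 0 /\ u * u = 0)) => [[u [u0 uu]]|red]; last first.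
  have redP : forall x : R, x != 0 -> x * x != 0.
    by move=> x x0; apply/negP => /eqP xx; apply: red; exists x.
  right; exists a0, b0; split => //.
  - by split=> //; exists b0.
  - by split=> //; exists a0; rewrite mulrC.
  - exact: neq_of (redP _ a00) ab0.
  move=> v [v0 [w [w0 vw]]].
  case: (eqVneq (v * a0) 0) => [->|va]; first by left.
  case: (eqVneq (v * b0) 0) => [->|vb]; first by right.
  have e1 : v * a0 * (v * b0) = 0 by rewrite mulrACA ab0 mulr0.
  have e2 : v * b0 * w = 0 by rewrite mulrAC vw mul0r.
  have e3 : v * a0 * w = 0 by rewrite mulrAC vw mul0r.
  have w1 : w != 0 by [].
  exfalso; apply: (NT va vb w1 (neq_of (redP _ va) e1) (neq_of (redP _ vb) e2)
     (neq_of (redP _ va) e3) e1 e2 e3).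
have ru : forall r, r * u = 0 \/ r * u = u \/ r * u = - u.
  move=> r; case: (eqVneq (r * u) 0) => [->|ru0]; first by left.
  right; apply: Fsq => //.
  - by rewrite mulrACA uu mulr0.
  - by rewrite mulrCA uu mulr0.
have Zu : Zs u by split=> //; exists u.
case: (eqVneq (u + u) 0) => [uu2|uu2]; last first.
  have nu0 : - u != 0 by rewrite oppr_eq0.
  have unu : u != - u by apply: contraNneq uu2 => E; rewrite {1}E addNr.
  have annu : forall a, a * u = 0 -> a = 0 \/ a = u \/ a = - u.
    move=> a au.
    case: (eqVneq a 0) => [->|an0]; first by left.
    case: (eqVneq a u) => [->|a1]; first by right; left.
    case: (eqVneq a (- u)) => [->|a2]; first by right; right.
    have e1 : u * - u = 0 by rewrite mulrN uu oppr0.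
    have e2 : a * - u = 0 by rewrite mulrN au oppr0.
    by exfalso; apply: (NT an0 u0 nu0 a1 unu a2 au e1 e2).
  left; exists u; split=> // v [v0 [w [w0 vw]]].
  case: (eqVneq (v * u) 0) => // vu; exfalso.
  have wu : w * u = 0.
    case: (ru v) => [|[E|E]]; first by move=> E; move: vu; rewrite E eqxx.
      by rewrite -E mulrA (mulrC w) vw mul0r.
    by rewrite -[u]opprK -E mulrN mulrA (mulrC w) vw mul0r oppr0.
  case: (annu w wu) => [w00|[E|E]]; first by move: w0; rewrite w00 eqxx.
    by move: vu; rewrite -E vw eqxx.
  by move: vu; rewrite -[u]opprK -E mulrN vw oppr0 eqxx.
have nuu : - u = u by apply/eqP; rewrite eq_sym -addr_eq0 uu2.
have ru2 : forall r, r * u = 0 \/ r * u = u.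
  by move=> r; case: (ru r) => [|[|]]; rewrite ?nuu; auto.
case: (pselect (exists v, Zs v /\ v * u != 0)) => [[v0 [Zv0 v0u]]|allu]; last first.
  left; exists u; split=> // v Zv.
  case: (eqVneq (v * u) 0) => // vu; exfalso; apply: allu; by exists v.
have v0uu : v0 * u = u by case: (ru2 v0) => // E; move: v0u; rewrite E eqxx.
case: Zv0 => [v00 [w0 [w00 v0w0]]].
have wuP : forall v w, v * u = u -> v * w = 0 -> w * u = 0.
  by move=> v w vu vw; rewrite -vu mulrA (mulrC w) vw mul0r.
have wneu : forall v w, v * u = u -> v * w = 0 -> w != u.
  by move=> v w vu vw; apply/eqP => E; move: vw; rewrite E vu => /eqP; rewrite (negbTE u0).
have L : forall v a w, v * u = u -> a * u = 0 -> w != 0 -> v * w = 0 ->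
    v * a = 0 \/ v * a = u \/ v * a = w.
  move=> v a w vu au wn0 vw.
  case: (eqVneq (v * a) 0) => [|va0]; first by left.
  case: (eqVneq (v * a) u) => [|va1]; first by right; left.
  case: (eqVneq (v * a) w) => [|va2]; first by right; right.
  have e1 : v * a * w = 0 by rewrite mulrAC vw mul0r.
  have e2 : w * u = 0 by exact: (wuP v).
  have e3 : v * a * u = 0 by rewrite -mulrA au mulr0.
  by exfalso; apply: (NT va0 wn0 u0 va2 (wneu v w vu vw) va1 e1 e2 e3).
have M : forall x, x * u = 0 -> x != 0 -> x != u -> x * x != 0.
  move=> x xu x0 xnu; apply/eqP => xx.
  case: (Fsq u0 x0 uu xx); first by rewrite mulrC.
    by move=> E; move: xnu; rewrite E eqxx.
  by rewrite nuu => E; move: xnu; rewrite E eqxx.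
have w0u : w0 * u = 0 := wuP _ _ v0uu v0w0.
case: (pselect (exists v, Zs v /\ v * u != 0 /\ v * w0 != 0)) => [[v [Zv [vu' vw0]]]|allw]; last first.
  right; exists u, w0; split=> //.
  - by split=> //; exists v0; split=> //; rewrite mulrC.
  - by rewrite eq_sym (wneu v0).
  - by rewrite mulrC.
  move=> v Zv; case: (eqVneq (v * u) 0) => [|vu]; first by left.
  case: (eqVneq (v * w0) 0) => [|vw]; first by right.
  by exfalso; apply: allw; exists v.
have vuu : v * u = u by case: (ru2 v) => // E; move: vu'; rewrite E eqxx.
case: (Zv) => [v0' [w [w0' vw]]].
pose t := v * w0.
have t0 : t != 0 by [].
have tnu : t != u.
  apply/eqP => E; move: u0; rewrite -v0uu -E /t mulrCA v0w0 mulr0 eqxx //.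
have uniq : forall w', w' != 0 -> v * w' = 0 -> w' = t.
  move=> w' w'0 vw'; case: (L v w0 w' vuu w0u w'0 vw') => [E|[E|E]].
  - by move: t0; rewrite /t E eqxx.
  - by move: tnu; rewrite /t E eqxx.
  - by rewrite /t E.
have vt : v * t = 0 by rewrite -(uniq w w0' vw).
have tu : t * u = 0 by rewrite /t -mulrA w0u mulr0.
have tt0 : t * t != 0 := M t tu t0 tnu.
have ttt : t * t = t by apply: uniq => //; rewrite mulrA vt mul0r.
have rt : forall r, r * t = 0 \/ r * t = t.
  move=> r; case: (eqVneq (r * t) 0) => [|rt0]; first by left.
  by right; apply: uniq => //; rewrite mulrCA vt mulr0.
right; exists t, u; split=> //.
- by split=> //; exists v; split=> //; rewrite mulrC.
move=> x [x0 [y [y0 xy]]].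
case: (rt x) => [|xt]; first by left.
right.
pose s := x - t; pose s' := y - y * t.
have st : s * t = 0 by rewrite /s mulrBl xt ttt subrr.
have s'0 : s' != 0.
  rewrite /s' subr_eq0; apply/eqP => E.
  case: (rt y) => E'; rewrite E' in E.
    by move: y0; rewrite E eqxx.
  by move: xy; rewrite E xt => /eqP; rewrite (negbTE t0).
have s't : s' * t = 0 by rewrite /s' mulrBl -mulrA ttt subrr.
have xs' : x * s' = 0 by rewrite /s' mulrBr xy mulrA xy mul0r subrr.
have ss' : s * s' = 0 by rewrite /s mulrBl xs' mulrC s't subrr.
have xE : x = s + t by rewrite /s subrK.
case: (eqVneq s 0) => [s0|s0]; first by rewrite xE s0 add0r.
rewrite xE mulrDl tu addr0.
case: (ru2 s) => // su; exfalso.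
case: (eqVneq s s') => [ss|sns].
  have : s * s = 0 by rewrite {2}ss.
  move=> ss0; move: u0; rewrite -su -{1}su mulrA ss0 mul0r eqxx //.
have h1 : s != t by apply/eqP => E; move: tt0; rewrite -{1}E st eqxx.
have h2 : t != s' by apply/eqP => E; move: tt0; rewrite {2}E mulrC s't eqxx.
have h3 : t * s' = 0 by rewrite mulrC.
exact: (NT s0 t0 s'0 h1 h2 sns st h3 ss').
Qed.

End ML.

Section Top.
Local Open Scope classical_set_scope.
Variable R : comNzRingType.
Local Notation Zs := (@zdv_star R).

Lemma adjE (u w : R) : zdg_adj u w <-> u * w = 0.
Proof.
rewrite /zdg_adj; split; first by case=> [[_ ->]|[-> ->]].
move=> uw; case: (eqVneq u w) => [E|ne].
  by right; split=> //; rewrite {2}E.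
by left; split=> //; apply/eqP.
Qed.

Lemma card1_le (x c : R) (X' : set R) : X' c -> ([set x] #<= X')%card.
Proof.
move=> Xc.
have : $|{injfun [set x] >-> X'}|.
  apply/injfunPex; exists (fun _ => c).
    by move=> z _.
  by move=> z z'; rewrite !inE /= => -> ->.
by case=> f; exact: inj_card_le f.
Qed.

Lemma card2_le (a b c d : R) (X' : set R) : X' c -> X' d -> c != d ->
  ([set z | z = a \/ z = b] #<= X')%card.
Proof.
move=> Xc Xd cd.
have : $|{injfun [set z | z = a \/ z = b] >-> X'}|.
  apply/injfunPex; exists (fun z => if z == a then c else d).
    by move=> z _ /=; case: ifP.
  move=> z z'; rewrite !in_setE /= => Hz Hz'.
  case: (eqVneq z a) => [->|za]; case: (eqVneq z' a) => [->|z'a] //.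
  - by move=> E; move: cd; rewrite E eqxx.
  - by move=> E; move: cd; rewrite E eqxx.
  - by case: Hz => [E|->]; [move: za; rewrite E eqxx|case: Hz' => [E|->] //; move: z'a; rewrite E eqxx].
by case=> f; exact: inj_card_le f.
Qed.

Lemma GammaA : DomA R -> gamma_eq_gammat R.
Proof.
case=> x [x0 xx domx].
have Zx : Zs x by split=> //; exists x.
have domX : @dominating R [set x].
  split; first by move=> z ->.
  by move=> v Zv _; exists x => //; apply/adjE; exact: domx.
have totX : @total_dominating R [set x].
  split; first by move=> z ->.
  by move=> v Zv; exists x => //; apply/adjE; exact: domx.
exists [set x], [set x]; split=> //.
- move=> X' [sub dom]; case: (pselect (X' x)) => [Xx|nXx].
    exact: card1_le Xx.
  by case: (dom x Zx nXx) => c Xc _; exact: card1_le Xc.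
- by move=> Y' [sub dom]; case: (dom x Zx) => c Yc _; exact: card1_le Yc.
Qed.

Definition single_dom := exists c, Zs c /\ forall v, Zs v -> v != c -> v * c = 0.

Lemma GammaB : DomB R -> ~ single_dom -> gamma_eq_gammat R.
Proof.
case=> a [b [Za Zb ab abz dom]] nsd.
pose P := [set z : R | z = a \/ z = b].
have subP : P `<=` Zs by move=> z [->|->].
have totP : @total_dominating R P.
  split=> // v Zv; case: (dom v Zv) => E; [exists a|exists b];
    rewrite /P /=; auto; exact/adjE.
have domP : @dominating R P by split=> // v Zv _; case: totP => _ /(_ v Zv).
have two : forall X' : set R, X' `<=` Zs ->
    (forall v, Zs v -> ~ X' v -> exists2 x, X' x & zdg_adj v x) ->
    exists c d, [/\ X' c, X' d & c != d].
  move=> X' sub dX.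
  have [c Xc] : exists c, X' c.
    case: (pselect (X' a)) => [Xa|nXa]; first by exists a.
    by case: (dX a Za nXa) => c Xc _; exists c.
  case: (pselect (exists d, X' d /\ d != c)) => [[d [Xd dc]]|nd].
    by exists c, d; split=> //; rewrite eq_sym.
  exfalso; apply: nsd; exists c; split; first exact: sub.
  move=> v Zv vc.
  have nXv : ~ X' v by move=> Xv; apply: nd; exists v.
  case: (dX v Zv nXv) => y Xy /adjE vy.
  case: (eqVneq y c) => [E|yc]; first by rewrite -E.
  by exfalso; apply: nd; exists y.
exists P, P; split=> //.
- move=> X' [sub dX]; case: (two X' sub dX) => c [d [Xc Xd cd]].
  exact: card2_le Xc Xd cd.
- move=> Y' [sub dY]; case: (two Y' sub (fun v Zv _ => dY v Zv)) => c [d [Xc Xd cd]].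
  exact: card2_le Xc Xd cd.
Qed.

End Top.

Lemma no_tri (R : comNzRingType) :
  (girth_is R (Some 4%N) \/ girth_is R None) ->
  forall x y z : R, x != 0 -> y != 0 -> z != 0 ->
  x != y -> y != z -> x != z -> x * y = 0 -> y * z = 0 -> x * z = 0 -> False.
Proof.
move=> g x y z x0 y0 z0 xy yz xz exy eyz exz.
have nc : ~ @has_cycle R 3.
  by case: g => [[_ H]|H]; [apply: H|apply: H].
apply: nc; split=> //.
pose v (i : 'I_3) : R := if val i == 0%N then x else if val i == 1%N then y else z.
have yx : y != x by rewrite eq_sym.
have zy : z != y by rewrite eq_sym.
have zx : z != x by rewrite eq_sym.
exists v; split.
- move=> [[|[|[|i]]] Hi] [[|[|[|j]]] Hj] //=; rewrite /v /= => E;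
    try (by apply: val_inj); exfalso; move/eqP: E;
    by rewrite ?(negbTE xy) ?(negbTE yz) ?(negbTE xz) ?(negbTE yx) ?(negbTE zy) ?(negbTE zx).
- move=> [[|[|[|i]]] Hi] //=; rewrite /v /=.
  + by split=> //; exists y.
  + by split=> //; exists z.
  + by split=> //; exists x; rewrite mulrC.
- move=> [[|[|[|i]]] Hi] //=; rewrite /v /=; apply/adjE => //.
  by rewrite mulrC.
Qed.

Theorem corollary3p6 (R : comNzRingType) :
  ~ is_integral_domain R ->
  (girth_is R (Some 4%N) \/ girth_is R None) ->
  gamma_eq_gammat R \/
  exists (D : idomainType) (f : {rmorphism R -> ('Z_2 * D)%type}), bijective f.
Proof.
move=> nID g.
have NT := no_tri g.
have [a0 [b0 [a00 b00 ab0]]] : exists a b : R, [/\ a != 0, b != 0 & a * b = 0].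
  apply: contra_notP nID => H a b ab.
  case: (eqVneq a 0) => [|a0]; first by left.
  case: (eqVneq b 0) => [|b0]; first by right.
  by exfalso; apply: H; exists a, b.
case: (ML NT a00 b00 ab0) => [DA|DB]; first by left; apply: GammaA.
case: (pselect (single_dom R)) => [[c [Zc domc]]|nsd]; last by left; apply: GammaB.
have [c0 [y [y0 cy]]] := Zc.
case: (eqVneq (c * c) 0) => [cc0|cc0].
  left; apply: GammaA; exists c; split=> // v Zv.
  by case: (eqVneq v c) => [->|vc]; [|apply: domc].
have Zcc : @zdv_star R (c * c).
  by split=> //; exists y; split=> //; rewrite -mulrA cy mulr0.
case: (eqVneq (c * c) c) => [idem|nidem]; last first.
  have ccc : c * c * c = 0 by apply: domc.
  left; apply: GammaA; exists (c * c); split=> //.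
    by rewrite mulrA ccc mul0r.
  move=> v Zv; case: (eqVneq v c) => [->|vc].
    by rewrite mulrC.
  by rewrite mulrA (domc v Zv vc) mul0r.
right.
have c1 : c != 1 by apply: contraNneq y0 => E; rewrite -cy E mul1r.
have c1' : 1 - c != 0 by rewrite subr_eq0 eq_sym.
have h : Dhyp c.
  split=> //.
  - move=> x z xc zc xz.
    case: (eqVneq x 0) => [|x0]; first by left.
    case: (eqVneq z 0) => [|z0]; first by right.
    exfalso.
    have Zxc : @zdv_star R (x + c).
      split.
        apply/eqP => E.
        have cE : c = - x by apply/eqP; rewrite -addr_eq0 addrC E.
        by move: c0; rewrite -idem {1}cE mulNr xc oppr0 eqxx.
      by exists z; split=> //; rewrite mulrDl xz mulrC zc addr0.
    have xcc : x + c != c by rewrite -subr_eq0 addrK.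
    have := domc _ Zxc xcc; rewrite mulrDl xc add0r idem => /eqP.
    by rewrite (negbTE c0).
  - move=> r; case: (eqVneq (r * c) 0) => [|rc0]; first by left.
    case: (eqVneq (r * c) c) => [|rcc]; first by right.
    exfalso.
    have Zrc : @zdv_star R (r * c).
      split=> //; exists (1 - c); split=> //.
      by rewrite mulrBr mulr1 -mulrA idem subrr.
    have := domc _ Zrc rcc; rewrite -mulrA idem => /eqP.
    by rewrite (negbTE rc0).
exists (Dty h), (fmap h).
exact: fmap_bij h.
Qed.
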